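(* (a) For every $\varepsilon>0$ there is a single-item instance with two agents and SOS valuations such that every ex-post IC-IR mechanism (randomized, not necessarily universally) has, at some signal profile $\mathbf{s}$, expected welfare at most $(\tfrac12+\varepsilon)$ times the optimal welfare $\max_i v_i(\mathbf{s})$. (b) For every integer $m\ge3$ and $d=m^2$, there is a single-item instance with $n=m=\sqrt d$ agents and $d$-SOS valuations such that every ex-post IC-IR mechanism has, at some signal profile, expected welfare at most $\frac{2\sqrt d}{d}+o(1)$ times the optimal welfare; hence no such mechanism achieves an approximation ratio better than $\Omega(\sqrt d)$.
   Context: Single-item interdependent-value model: agents have private signals $s_j\ge0$ (an agent may have a trivial fixed signal), values $v_i(\mathbf{s})\ge0$ are public functions of the signal profile, weakly increasing in each coordinate. A (randomized) mechanism maps reports $\mathbf{s}$ to winning probabilities $x_i(\mathbf{s})$ with $\sum_i x_i(\mathbf{s})\le1$ and expected payments; it is ex-post IC iff $x_i(s_i,\mathbf{s}_{-i})$ is weakly increasing in $s_i$ for every $i$ and $\mathbf{s}_{-i}$. Expected welfare at $\mathbf{s}$ is $\sum_i x_i(\mathbf{s})v_i(\mathbf{s})$. $d$-SOS: for every coordinate $j$, $s_j\ge0$, $\delta\ge0$, and $\mathbf{s}'_{-j}\le\mathbf{s}_{-j}$ coordinate-wise, $d\big(v(\mathbf{s}'_{-j},s_j+\delta)-v(\mathbf{s}'_{-j},s_j)\big)\ge v(\mathbf{s}_{-j},s_j+\delta)-v(\mathbf{s}_{-j},s_j)$; SOS means $d=1$. *)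

(* Defs.v *)
From Stdlib Require Import Reals Lra Arith.
Open Scope R_scope.

(* Agents are 0..n-1; a signal profile is s : nat -> R.
   triv j = true means agent j has a trivial fixed signal (fixed at 0). *)
Definition profile := nat -> R.

Definition valid (n : nat) (triv : nat -> bool) (s : profile) : Prop :=
  forall j, ((j < n)%nat /\ triv j = false -> 0 <= s j) /\
            (((n <= j)%nat \/ triv j = true) -> s j = 0).

Definition upd (s : profile) (j : nat) (t : R) : profile :=
  fun k => if Nat.eqb k j then t else s k.

Fixpoint rsum (n : nat) (f : nat -> R) : R :=
  match n with O => 0 | S k => rsum k f + f k end.

Fixpoint rmax (n : nat) (f : nat -> R) : R :=
  match n with O => 0 | S k => Rmax (rmax k f) (f k) end.

Definition valuations (n : nat) (triv : nat -> bool) (v : nat -> profile -> R) : Prop :=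
  (forall i s, (i < n)%nat -> valid n triv s -> 0 <= v i s) /\
  (forall i j s t, (i < n)%nat -> (j < n)%nat -> triv j = false ->
     valid n triv s -> s j <= t -> v i s <= v i (upd s j t)).

Definition dSOS (d : R) (n : nat) (triv : nat -> bool) (v : nat -> profile -> R) : Prop :=
  forall i j (s s' : profile) (x delta : R),
    (i < n)%nat -> (j < n)%nat -> triv j = false ->
    valid n triv s -> valid n triv s' ->
    (forall k, k <> j -> s' k <= s k) ->
    0 <= x -> 0 <= delta ->
    d * (v i (upd s' j (x + delta)) - v i (upd s' j x))
      >= v i (upd s j (x + delta)) - v i (upd s j x).

(* randomized allocation rule (feasible) which is ex-post IC, i.e.
   x_j monotone in own signal *)
Definition ICmech (n : nat) (triv : nat -> bool) (x : nat -> profile -> R) : Prop :=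
  (forall i s, (i < n)%nat -> valid n triv s -> 0 <= x i s) /\
  (forall s, valid n triv s -> rsum n (fun i => x i s) <= 1) /\
  (forall j s t, (j < n)%nat -> triv j = false -> valid n triv s ->
     s j <= t -> x j s <= x j (upd s j t)).

Definition welfare (n : nat) (x v : nat -> profile -> R) (s : profile) : R :=
  rsum n (fun i => x i s * v i s).

Definition opt (n : nat) (v : nat -> profile -> R) (s : profile) : R :=
  rmax n (fun i => v i s).

(* Main.v *)
Require Import Defs.
From Stdlib Require Import Reals Lra Lia Arith Classical FunctionalExtensionality.
Open Scope R_scope.

Lemma rsum_ext n f g : (forall k, (k < n)%nat -> f k = g k) -> rsum n f = rsum n g.
Proof. induction n; simpl; intros H; auto. rewrite IHn by (intros; apply H; lia). rewrite H by lia. auto. Qed.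

Lemma rsum_mono n f g : (forall k, (k < n)%nat -> f k <= g k) -> rsum n f <= rsum n g.
Proof. induction n; simpl; intros H; [lra|]. assert (rsum n f <= rsum n g) by (apply IHn; intros; apply H; lia).
 specialize (H n ltac:(lia)). lra. Qed.

Lemma rsum_upd n s j y : (j < n)%nat -> rsum n (upd s j y) = rsum n s - s j + y.
Proof. induction n; simpl; intros H; [lia|]. unfold upd at 2.
 destruct (Nat.eq_dec j n) as [->|Hn].
 - rewrite Nat.eqb_refl. rewrite (rsum_ext n _ s). lra. intros k Hk. unfold upd.
   destruct (Nat.eqb_spec k n); [lia|auto].
 - rewrite IHn by lia. destruct (Nat.eqb_spec n j); [lia|]. lra. Qed.

Lemma rsum_scal n f a : rsum n (fun k => f k * a) = rsum n f * a.
Proof. induction n; simpl; [lra|]. rewrite IHn. lra. Qed.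

Lemma rsum_const1 n : rsum n (fun _ => 1) = INR n.
Proof. induction n; simpl rsum; [simpl; lra|]. rewrite IHn, S_INR. lra. Qed.

Lemma rsum_ge n f a : (forall i, (i < n)%nat -> a <= f i) -> INR n * a <= rsum n f.
Proof. induction n; simpl rsum; intros H; [simpl; lra|]. rewrite S_INR.
 assert (INR n * a <= rsum n f) by (apply IHn; intros; apply H; lia). specialize (H n ltac:(lia)). lra. Qed.

Lemma pigeon n f : (1 <= n)%nat -> rsum n f <= 1 -> exists i, (i < n)%nat /\ f i <= 1 / INR n.
Proof. intros Hn Hs. apply NNPP. intros Hno.
 destruct n as [|k]; [lia|]. simpl rsum in Hs.
 assert (HI : forall i, (i < S k)%nat -> 1 / INR (S k) < f i).
 { intros i Hi. apply Rnot_le_lt. intros Hc. apply Hno. eauto. }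
 assert (INR k * (1 / INR (S k)) <= rsum k f) by (apply rsum_ge; intros; left; apply HI; lia).
 specialize (HI k ltac:(lia)).
 assert (Hpos : 0 < INR (S k)) by (apply lt_0_INR; lia).
 assert (INR (S k) * (1 / INR (S k)) = 1) by (field; lra). rewrite S_INR in *. lra. Qed.

Lemma rmax_ge n f i : (i < n)%nat -> f i <= rmax n f.
Proof. induction n; simpl; intros H; [lia|]. destruct (Nat.eq_dec i n) as [->|Hn].
 - apply Rmax_r. - eapply Rle_trans; [apply IHn; lia| apply Rmax_l]. Qed.

Definition G (m : nat) (c t : R) : R := t + c * Rmax 0 (t - (INR m - 2)).
Definition V (m : nat) (c : R) (i : nat) (s : profile) : R := G m c (rsum m (upd s i 0)).

Lemma Rmax_inc u dl : 0 <= dl -> 0 <= Rmax 0 (u + dl) - Rmax 0 u <= dl.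
Proof. intros. unfold Rmax. destruct (Rle_dec 0 (u+dl)); destruct (Rle_dec 0 u); lra. Qed.

Lemma G_inc m c t dl : 0 <= c -> 0 <= dl -> dl <= G m c (t + dl) - G m c t <= (1 + c) * dl.
Proof. intros Hc Hd. unfold G. pose proof (Rmax_inc (t - (INR m - 2)) dl Hd).
 replace (t + dl - (INR m - 2)) with (t - (INR m - 2) + dl) by ring.
 split; nra. Qed.

Lemma G_mono m c t1 t2 : 0 <= c -> t1 <= t2 -> G m c t1 <= G m c t2.
Proof. intros. pose proof (G_inc m c t1 (t2 - t1) H ltac:(lra)).
 replace (t1 + (t2 - t1)) with t2 in H1 by ring. lra. Qed.

Lemma G_ge m c t : 0 <= c -> t <= G m c t.
Proof. intros. unfold G. pose proof (Rmax_l 0 (t - (INR m - 2))). nra. Qed.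

Lemma upd_eq s k y : upd s k y k = y.
Proof. unfold upd. rewrite Nat.eqb_refl. auto. Qed.
Lemma upd_neq s k j y : k <> j -> upd s j y k = s k.
Proof. intros. unfold upd. destruct (Nat.eqb_spec k j); auto; lia. Qed.

Lemma upd_same s i y z : upd (upd s i y) i z = upd s i z.
Proof. apply functional_extensionality; intros k. unfold upd. destruct (k =? i); auto. Qed.

Lemma sum_split m s i j y : (j < m)%nat -> j <> i ->
  rsum m (upd (upd s j y) i 0) = rsum m (upd (upd s i 0) j 0) + y.
Proof. intros Hj Hij.
 replace (upd (upd s j y) i 0) with (upd (upd (upd s i 0) j 0) j y).
 - rewrite rsum_upd by auto. replace (upd (upd s i 0) j 0 j) with 0 by (unfold upd; rewrite Nat.eqb_refl; auto). lra.
 - apply functional_extensionality; intros k. unfold upd.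
   destruct (Nat.eqb_spec k j), (Nat.eqb_spec k i); subst; auto; lia. Qed.

Lemma gen (m : nat) (c d : R) : (2 <= m)%nat -> 0 <= c -> 1 + c <= d ->
  valuations m (fun _ => false) (V m c) /\ dSOS d m (fun _ => false) (V m c) /\
  forall x, ICmech m (fun _ => false) x -> exists s, valid m (fun _ => false) s /\
    INR m - 1 + c <= opt m (V m c) s /\
    welfare m x (V m c) s <= (INR m - 2) + (1 + c) / INR m.
Proof.
 intros Hm Hc Hd. assert (HmR : 2 <= INR m) by (replace 2 with (INR 2) by (simpl; lra); apply le_INR; auto).
 split; [split|split].
 - intros i s Hi Hv. unfold V. eapply Rle_trans; [|apply G_ge; auto].
   replace 0 with (rsum m (fun _ => 0)) at 1 by (clear; induction m; simpl; lra).
   apply rsum_mono. intros k Hk. unfold upd. destruct (k =? i); [lra|]. apply (Hv k). auto.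
 - intros i j s t Hi Hj _ Hv Hst. unfold V. apply G_mono; auto. apply rsum_mono.
   intros k Hk. unfold upd. destruct (k =? i); [lra|]. destruct (Nat.eqb_spec k j); subst; lra.
 - intros i j s s' x0 dl Hi Hj _ _ _ _ Hx Hdl. unfold V.
   destruct (Nat.eq_dec j i) as [->|Hji].
   + rewrite !upd_same. lra.
   + rewrite (sum_split m s' i j (x0 + dl)), (sum_split m s' i j x0),
       (sum_split m s i j (x0 + dl)), (sum_split m s i j x0) by auto.
     rewrite <- !Rplus_assoc.
     pose proof (G_inc m c (rsum m (upd (upd s' i 0) j 0) + x0) dl Hc Hdl).
     pose proof (G_inc m c (rsum m (upd (upd s i 0) j 0) + x0) dl Hc Hdl).
     set (A := G m c (rsum m (upd (upd s' i 0) j 0) + x0 + dl) - G m c (rsum m (upd (upd s' i 0) j 0) + x0)) in *.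
     set (B := G m c (rsum m (upd (upd s i 0) j 0) + x0 + dl) - G m c (rsum m (upd (upd s i 0) j 0) + x0)) in *.
     apply Rle_ge. assert (d * dl <= d * A) by (apply Rmult_le_compat_l; lra).
     assert ((1 + c) * dl <= d * dl) by (apply Rmult_le_compat_r; lra). lra.
 - intros x [Hx0 [Hx1 Hx2]].
   set (one := fun k => if (k <? m)%nat then 1 else 0).
   assert (Hvone : valid m (fun _ => false) one).
   { intros j. unfold one. destruct (Nat.ltb_spec j m); split; intros HH; try lra; try lia;
     try (destruct HH as [HH|HH]; [lia|discriminate]). }
   assert (Hvp : forall i, valid m (fun _ => false) (upd one i 0)).
   { intros i j. unfold upd. destruct (j =? i); [split; intros; lra|apply Hvone]. }
   assert (Hsone : rsum m one = INR m).
   { rewrite <- rsum_const1. apply rsum_ext. intros k Hk. unfold one.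
     destruct (Nat.ltb_spec k m); lia || auto. }
   destruct (pigeon m (fun i => x i one) ltac:(lia) (Hx1 one Hvone)) as [i [Hi Hxi]].
   assert (Hup : upd (upd one i 0) i 1 = one).
   { rewrite upd_same. apply functional_extensionality; intros k. unfold upd, one.
     destruct (Nat.eqb_spec k i); subst; auto. destruct (Nat.ltb_spec i m); auto; lia. }
   assert (Hxip : x i (upd one i 0) <= 1 / INR m).
   { pose proof (Hx2 i (upd one i 0) 1 Hi eq_refl (Hvp i)) as HH.
     rewrite Hup in HH. unfold upd at 1 in HH. rewrite Nat.eqb_refl in HH. lra. }
   assert (Hone_i : one i = 1) by (unfold one; destruct (Nat.ltb_spec i m); auto; lia).
   assert (Hsp : rsum m (upd one i 0) = INR m - 1) by (rewrite rsum_upd, Hsone, Hone_i; auto; lra).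
   assert (HVi : V m c i (upd one i 0) = INR m - 1 + c).
   { unfold V. rewrite upd_same, Hsp. unfold G. replace (INR m - 1 - (INR m - 2)) with 1 by ring.
     rewrite Rmax_right by lra. ring. }
   assert (HVj : forall j, (j < m)%nat -> j <> i -> V m c j (upd one i 0) = INR m - 2).
   { intros j Hj Hji. unfold V. rewrite rsum_upd, Hsp by auto. unfold upd at 1.
     destruct (Nat.eqb_spec j i); [lia|]. unfold one. destruct (Nat.ltb_spec j m); [|lia].
     unfold G. replace (INR m - 1 - 1 + 0 - (INR m - 2)) with 0 by ring.
     rewrite Rmax_left by lra. ring. }
   exists (upd one i 0). split; [auto|split].
   + rewrite <- HVi. unfold opt. apply (rmax_ge m (fun j => V m c j (upd one i 0))). auto.
   + unfold welfare.
     rewrite (rsum_ext m _ (upd (fun j => x j (upd one i 0) * (INR m - 2)) i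
                               (x i (upd one i 0) * (INR m - 1 + c)))).
     * rewrite rsum_upd, rsum_scal by auto.
       pose proof (Hx1 _ (Hvp i)). pose proof (Hx0 i _ Hi (Hvp i)).
       assert (Hpos : 0 < INR m) by lra.
       assert ((1 + c) * x i (upd one i 0) <= (1 + c) / INR m).
       { unfold Rdiv. replace ((1+c) * / INR m) with ((1 + c) * (1 / INR m)) by (field; lra). nra. }
       nra.
     * intros k Hk. destruct (Nat.eq_dec k i); subst.
       -- rewrite HVi, (upd_eq (fun j : nat => x j (upd one i 0) * (INR m - 2))). auto.
       -- rewrite (upd_neq (fun j : nat => x j (upd one i 0) * (INR m - 2))) by auto.
          rewrite HVj; auto.
Qed.

Theorem mainTheorem4 :
  (forall eps : R, 0 < eps ->
     exists (triv : nat -> bool) (v : nat -> profile -> R),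
       valuations 2 triv v /\ dSOS 1 2 triv v /\
       forall x : nat -> profile -> R, ICmech 2 triv x ->
         exists s, valid 2 triv s /\ 0 < opt 2 v s /\
           welfare 2 x v s <= (1/2 + eps) * opt 2 v s)
  /\
  (exists f : nat -> R, Un_cv f 0 /\
     forall m : nat, (3 <= m)%nat ->
       let d := INR (m * m) in
       exists (triv : nat -> bool) (v : nat -> profile -> R),
         valuations m triv v /\ dSOS d m triv v /\
         forall x : nat -> profile -> R, ICmech m triv x ->
           exists s, valid m triv s /\ 0 < opt m v s /\
             welfare m x v s <= (2 * sqrt d / d + f m) * opt m v s).
Proof.
 split.
 - intros eps Heps. destruct (gen 2 0 1 ltac:(lia) ltac:(lra) ltac:(lra)) as [H1 [H2 H3]].
   exists (fun _ => false), (V 2 0). split; [auto|split; [auto|]].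
   intros x Hx. destruct (H3 x Hx) as [s [Hs [Ho Hw]]]. exists s. simpl INR in *.
   split; auto. split; [lra|]. nra.
 - exists (fun _ => 0). split.
   + intros e He. exists 0%nat. intros. unfold R_dist. rewrite Rminus_0_r, Rabs_R0. auto.
   + intros m Hm d. assert (HmR : 3 <= INR m) by (replace 3 with (INR 3) by (simpl; lra); apply le_INR; auto).
     assert (Hd : d = INR m * INR m) by (unfold d; apply mult_INR).
     destruct (gen m (INR m * INR m - 1) d ltac:(lia) ltac:(nra) ltac:(lra)) as [H1 [H2 H3]].
     exists (fun _ => false), (V m (INR m * INR m - 1)). split; [auto|split; [auto|]].
     intros x Hx. destruct (H3 x Hx) as [s [Hs [Ho Hw]]]. exists s.
     split; auto. split; [nra|].
     rewrite Hd, sqrt_square by lra. rewrite Rplus_0_r.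
     replace (2 * INR m / (INR m * INR m)) with (2 / INR m) by (field; lra).
     replace ((1 + (INR m * INR m - 1)) / INR m) with (INR m) in Hw by (field; lra).
     apply (Rmult_le_reg_l (INR m)); [lra|].
     replace (INR m * (2 / INR m * opt m (V m (INR m * INR m - 1)) s))
       with (2 * opt m (V m (INR m * INR m - 1)) s) by (field; lra).
     nra.
Qed.
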